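(* Let $K$ be a field with $\operatorname{char}(K)\neq2$ and let $(M,N,(\cdot_1,\cdot_2),\partial,(\{-,-\},\langle-,-\rangle))$ be a braided crossed module of Leibniz $K$-algebras such that $\{n,n'\}=-\langle n',n\rangle$ for all $n,n'\in N$. Then $m\cdot_2n=-n\cdot_1m$ for all $m\in M$, $n\in N$, and $(M,N,\cdot_1,\partial,\{-,-\})$ is a braided crossed module of Lie $K$-algebras (in particular $M$ and $N$ are Lie $K$-algebras).
   Context: A Leibniz $K$-algebra: bilinear bracket with $[x,[y,z]]=[[x,y],z]-[[x,z],y]$. Leibniz action of $N$ on $M$: bilinear $\cdot_1\colon N\times M\to M$, $\cdot_2\colon M\times N\to M$ with $n\cdot_1[m,m']=[n\cdot_1m,m']-[n\cdot_1m',m]$; $[m,n\cdot_1m']=[m\cdot_2n,m']-[m,m']\cdot_2n$; $[m,m'\cdot_2n]=[m,m']\cdot_2n-[m\cdot_2n,m']$; $m\cdot_2[n,n']=(m\cdot_2n)\cdot_2n'-(m\cdot_2n')\cdot_2n$; $n\cdot_1(m\cdot_2n')=(n\cdot_1m)\cdot_2n'-[n,n']\cdot_1m$; $n\cdot_1(n'\cdot_1m)=[n,n']\cdot_1m-(n\cdot_1m)\cdot_2n'$. Crossed module of Leibniz algebras: such an action with a Leibniz homomorphism $\partial\colon M\to N$, $\partial(n\cdot_1m)=[n,\partial m]$, $\partial(m\cdot_2n)=[\partial m,n]$, $\partial(m)\cdot_1m'=[m,m']=m\cdot_2\partial(m')$. Braiding: bilinear $\{-,-\},\langle-,-\rangle\colon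 N\times N\to M$ with $\partial\{n,n'\}=[n,n']=\partial\langle n,n'\rangle$; $\{\partial m,\partial m'\}=[m,m']=\langle\partial m,\partial m'\rangle$; $\{\partial m,n\}=m\cdot_2n=\langle\partial m,n\rangle$; $\{n,\partial m\}=n\cdot_1m=\langle n,\partial m\rangle$; $\{n,[n',n'']\}=\{[n,n'],n''\}-\{[n,n''],n'\}$; $\langle n,[n',n'']\rangle=\{[n,n'],n''\}-\langle[n,n''],n'\rangle$; $\{n,[n',n'']\}=\{[n,n'],n''\}-\langle[n,n''],n'\rangle$; $\langle n,[n',n'']\rangle=\langle[n,n'],n''\rangle-\langle[n,n''],n'\rangle$. A Lie action of a Lie algebra $N$ on a Lie algebra $M$ is a bilinear $\cdot\colon N\times M\to M$ with $[n,n']\cdot m=n\cdot(n'\cdot m)-n'\cdot(n\cdot m)$ and $n\cdot[m,m']=[n\cdot m,m']+[m,n\cdot m']$. A crossed module of Lie algebras $(M,N,\cdot,\partial)$: Lie action and Lie homomorphism $\partial$ with $\partial(n\cdot m)=[n,\partial m]$ and $\partial(m)\cdot m'=[m,m']$. A braiding on it is a bilinear $\{-,-\}\colon N\times N\to M$ with $\partial\{n,n'\}=[n,n']$; $\{\partial m,\partial m'\}=[m,m']$; $\{\partial m,n\}=-n\cdot m$; $\{n,\partial m\}=n\cdot m$; $\{n,[n',n'']\}=\{[n,n'],n''\}-\{[n,n''],n'\}$; $\{[n,n'],n''\}=\{n,[n',n'']\}-\{n',[n,n'']\}$. *)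

(* Defs.v *)
From HB Require Import structures.
From mathcomp Require Import all_boot all_algebra.
Set Implicit Arguments. Unset Strict Implicit. Unset Printing Implicit Defensive.
Import GRing.Theory.
Local Open Scope ring_scope.

Section Defs.
Variable K : fieldType.

Definition is_linear (U V : lmodType K) (f : U -> V) : Prop :=
  forall (a : K) (x y : U), f (a *: x + y) = a *: f x + f y.

Definition is_bilinear (U V W : lmodType K) (f : U -> V -> W) : Prop :=
  (forall (a : K) (x x' : U) (y : V), f (a *: x + x') y = a *: f x y + f x' y) /\
  (forall (a : K) (x : U) (y y' : V), f x (a *: y + y') = a *: f x y + f x y').

Definition is_leibniz_algebra (V : lmodType K) (br : V -> V -> V) : Prop :=
  is_bilinear br /\
  forall x y z, br x (br y z) = br (br x y) z - br (br x z) y.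

Definition is_lie_algebra (V : lmodType K) (br : V -> V -> V) : Prop :=
  [/\ is_bilinear br,
      (forall x, br x x = 0) &
      (forall x y z, br x (br y z) + br y (br z x) + br z (br x y) = 0)].

Section Leibniz.
Variables (M N : lmodType K) (bM : M -> M -> M) (bN : N -> N -> N).

Definition is_leibniz_hom (d : M -> N) : Prop :=
  is_linear d /\ forall m m', d (bM m m') = bN (d m) (d m').

Definition is_leibniz_action (act1 : N -> M -> M) (act2 : M -> N -> M) : Prop :=
  is_bilinear act1 /\ is_bilinear act2 /\
   (forall n m m', act1 n (bM m m') = bM (act1 n m) m' - bM (act1 n m') m) /\
   (forall m n m', bM m (act1 n m') = bM (act2 m n) m' - act2 (bM m m') n) /\
   (forall m m' n, bM m (act2 m' n) = act2 (bM m m') n - bM (act2 m n) m') /\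
   (forall m n n', act2 m (bN n n') = act2 (act2 m n) n' - act2 (act2 m n') n) /\
   (forall n m n', act1 n (act2 m n') = act2 (act1 n m) n' - act1 (bN n n') m) /\
   (forall n n' m, act1 n (act1 n' m) = act1 (bN n n') m - act2 (act1 n m) n').

Definition is_leibniz_crossed_module (act1 : N -> M -> M) (act2 : M -> N -> M)
    (d : M -> N) : Prop :=
  is_leibniz_algebra bM /\ is_leibniz_algebra bN /\
  is_leibniz_action act1 act2 /\ is_leibniz_hom d /\
  (forall n m, d (act1 n m) = bN n (d m)) /\
  (forall m n, d (act2 m n) = bN (d m) n) /\
  (forall m m', act1 (d m) m' = bM m m' /\ bM m m' = act2 m (d m')).

Definition is_leibniz_braiding (act1 : N -> M -> M) (act2 : M -> N -> M)
    (d : M -> N) (br1 br2 : N -> N -> M) : Prop :=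
  is_bilinear br1 /\ is_bilinear br2 /\
   (forall n n', d (br1 n n') = bN n n' /\ bN n n' = d (br2 n n')) /\
   (forall m m', br1 (d m) (d m') = bM m m' /\ bM m m' = br2 (d m) (d m')) /\
   (forall m n, br1 (d m) n = act2 m n /\ act2 m n = br2 (d m) n) /\
   (forall n m, br1 n (d m) = act1 n m /\ act1 n m = br2 n (d m)) /\
   forall n n' n'',
     [/\ br1 n (bN n' n'') = br1 (bN n n') n'' - br1 (bN n n'') n',
         br2 n (bN n' n'') = br1 (bN n n') n'' - br2 (bN n n'') n',
         br1 n (bN n' n'') = br1 (bN n n') n'' - br2 (bN n n'') n' &
         br2 n (bN n' n'') = br2 (bN n n') n'' - br2 (bN n n'') n'].

Definition is_braided_leibniz_crossed_module (act1 : N -> M -> M)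
    (act2 : M -> N -> M) (d : M -> N) (br1 br2 : N -> N -> M) : Prop :=
  is_leibniz_crossed_module act1 act2 d /\ is_leibniz_braiding act1 act2 d br1 br2.

Definition is_lie_hom (d : M -> N) : Prop :=
  is_linear d /\ forall m m', d (bM m m') = bN (d m) (d m').

Definition is_lie_action (act : N -> M -> M) : Prop :=
  [/\ is_bilinear act,
      (forall n n' m, act (bN n n') m = act n (act n' m) - act n' (act n m)) &
      (forall n m m', act n (bM m m') = bM (act n m) m' + bM m (act n m'))].

Definition is_lie_crossed_module (act : N -> M -> M) (d : M -> N) : Prop :=
  is_lie_algebra bM /\ is_lie_algebra bN /\ is_lie_action act /\ is_lie_hom d /\
      (forall n m, d (act n m) = bN n (d m)) /\
      (forall m m', act (d m) m' = bM m m').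

Definition is_lie_braiding (act : N -> M -> M) (d : M -> N) (br : N -> N -> M) : Prop :=
  is_bilinear br /\
   (forall n n', d (br n n') = bN n n') /\
   (forall m m', br (d m) (d m') = bM m m') /\
   (forall m n, br (d m) n = - act n m) /\
   (forall n m, br n (d m) = act n m) /\
   (forall n n' n'', br n (bN n' n'') = br (bN n n') n'' - br (bN n n'') n') /\
   (forall n n' n'', br (bN n n') n'' = br n (bN n' n'') - br n' (bN n n'')).

Definition is_braided_lie_crossed_module (act : N -> M -> M) (d : M -> N)
    (br : N -> N -> M) : Prop :=
  is_lie_crossed_module act d /\ is_lie_braiding act d br.

End Leibniz.
End Defs.

(* Main.v *)
Require Import Defs.
From HB Require Import structures.
From mathcomp Require Import all_boot all_algebra.
Import GRing.Theory.
Local Open Scope ring_scope.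

Lemma half_zero (K : fieldType) (V : lmodType K) (x : V) :
  (2%:R : K) != 0 -> x = - x -> x = 0.
Proof.
move=> h2 hx.
have h : (2%:R : K) *: x = 0 by rewrite scaler_nat mulr2n {1}hx addNr.
by rewrite -[x]scale1r -(mulVf h2) -scalerA h scaler0.
Qed.

Lemma lin_opp (K : fieldType) (U V : lmodType K) (f : U -> V) :
  is_linear f -> forall x, f (- x) = - f x.
Proof.
move=> hf x.
have h0 : f 0 = 0.
  have := hf 1 0 0; rewrite scaler0 addr0 scale1r => h.
  by apply/(addrI (f 0)); rewrite addr0 -h.
by have := hf (-1) x 0; rewrite addr0 h0 addr0 !scaleN1r.
Qed.

Theorem mainTheorem5 (K : fieldType) (M N : lmodType K)
    (bM : M -> M -> M) (bN : N -> N -> N)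
    (act1 : N -> M -> M) (act2 : M -> N -> M) (d : M -> N)
    (br1 br2 : N -> N -> M) :
  (2%:R : K) != 0 ->
  is_braided_leibniz_crossed_module bM bN act1 act2 d br1 br2 ->
  (forall n n' : N, br1 n n' = - br2 n' n) ->
  (forall (m : M) (n : N), act2 m n = - act1 n m) /\
  is_braided_lie_crossed_module bM bN act1 d br1.
Proof.
move=> h2 [[[bilM leibM] [[bilN leibN] [[bil1 [bil2 [a1 [a2 [a3 [a4 [a5 a6]]]]]]]
  [[dlin dhom] [d1 [d2 d3]]]]]]
  [bb1 [bb2 [bd [bdd [bdl [bdr bjac]]]]]]] hs.
have e2 : forall m n, act2 m n = - act1 n m.
  by move=> m n; rewrite -(bdl m n).1 hs (bdr n m).2.
have antiM : forall m m', bM m m' = - bM m' m.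
  by move=> m m'; rewrite -(bdd m m').1 hs (bdd m' m).2.
have antiN : forall n n', bN n n' = - bN n' n.
  by move=> n n'; rewrite -(bd n n').1 hs lin_opp // (bd n' n).2.
have altM : forall x, bM x x = 0 by move=> x; apply: half_zero h2 (antiM x x).
have altN : forall x, bN x x = 0 by move=> x; apply: half_zero h2 (antiN x x).
have br12 : forall x y z, br1 (bN x z) y = br2 (bN x z) y.
  move=> x y z; have [j1 _ j3 _] := bjac x y z.
  by move: j3; rewrite j1 => /addrI /oppr_inj.
split=> //; split; last first.
  split=> //; split; first by move=> n n'; rewrite (bd n n').1.
  split; first by move=> m m'; rewrite (bdd m m').1.
  split; first by move=> m n; rewrite (bdl m n).1 e2.
  split; first by move=> n m; rewrite (bdr n m).1.
  split; first by move=> n n' n''; have [] := bjac n n' n''.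
  move=> n n' n''; have [j1 _ _ _] := bjac n n' n''.
  by rewrite j1 (hs n') -br12 opprK subrK.
split; first split=> // x y z.
  have neg : forall u v, bM u (- v) = - bM u v.
    by move=> u; apply: lin_opp => a v w; exact: (bilM.2 a u v w).
  rewrite leibM [bM (bM x z) y]antiM [bM (bM x y) z]antiM [bM z x]antiM neg.
  by rewrite opprK addrK addNr.
split; first split=> // x y z.
  have neg : forall u v, bN u (- v) = - bN u v.
    by move=> u; apply: lin_opp => a v w; exact: (bilN.2 a u v w).
  rewrite leibN [bN (bN x z) y]antiN [bN (bN x y) z]antiN [bN z x]antiN neg.
  by rewrite opprK addrK addNr.
split.
  split=> //.
    by move=> n n' m; rewrite a6 e2 opprK addrK.
  by move=> n m m'; rewrite a1 [bM (act1 n m') m]antiM opprK.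
split; first by split.
split=> //.
by move=> m m'; rewrite (d3 m m').1.
Qed.
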